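(* Let $a,A$ be real numbers with $a+3>0$ and $\frac{a+3}{2}=\frac{2}{A+3}$, and let $\xi,\eta,\mu,\mathcal{E},L$ be real numbers. Consider $$U(r)=\xi r^{a+1}+\mu r^{2\left(\sqrt{\frac{a+3}{2}}-1\right)},\qquad V(\rho)=\eta\rho^{A+1}+\mu\rho^{2\left(\sqrt{\frac{A+3}{2}}-1\right)}.$$ Then: (i) $U$ and $V$ are classically Newtonianly dual: if $\xi=-\mathcal{E}$ and $\theta$ satisfies the orbit equation for $U$ with energy $E=-\eta$ and angular momentum $L$ on an open interval $I\subset(0,\infty)$, then $\phi(\rho)=\frac{2}{A+3}\theta\left(\rho^{(A+3)/2}\right)$ satisfies the orbit equation for $V$ with energy $\mathcal{E}$ and angular momentum $L$ on $J=\{\rho>0:\rho^{(A+3)/2}\in I\}$; (ii) the terms $\xi r^{a+1}$ and $\eta\rho^{A+1}$ are Newtonianly dual power potentials, and so are $\mu r^{2(\sqrt{(a+3)/2}-1)}$ and $\mu\rho^{2(\sqrt{(A+3)/2}-1)}$; i.e., writing the second-term exponents as $b+1$ and $B+1$ with $b=2\sqrt{\frac{a+3}{2}}-3$, $B=2\sqrt{\frac{A+3}{2}}-3$, one has $\frac{b+3}{2}=\frac{2}{B+3}$ (as well as $\frac{a+3}{2}=\frac{2}{A+3}$).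
   Context: For a central potential $W$ on $(0,\infty)$, energy $E$ and angular momentum $L$, a differentiable function $\theta$ on an open interval $I\subset(0,\infty)$ satisfies the (classical) orbit equation if for all $r\in I$ the quantity $E-\frac{L^2}{2r^2}-W(r)$ is positive and $\frac{d\theta}{dr}=\frac{L/r^{2}}{\sqrt{2\left[E-\frac{L^{2}}{2r^{2}}-W(r)\right]}}$. Two power potentials $\xi r^{\alpha+1}$ and $\eta\rho^{\beta+1}$ are called Newtonianly dual when $\frac{\alpha+3}{2}=\frac{2}{\beta+3}$. *)

(* Defs.v *)
From Stdlib Require Import Reals.
From Coquelicot Require Import Coquelicot.
Open Scope R_scope.

Definition is_open_interval (I : R -> Prop) : Prop :=
  exists lo hi : Rbar, forall r, I r <-> (Rbar_lt lo r /\ Rbar_lt r hi).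

Definition orbit_eq (W : R -> R) (E L : R) (theta : R -> R) (I : R -> Prop) : Prop :=
  forall r, I r ->
    0 < E - L ^ 2 / (2 * r ^ 2) - W r /\
    is_derive theta r ((L / r ^ 2) / sqrt (2 * (E - L ^ 2 / (2 * r ^ 2) - W r))).

(* Power potentials xi r^(alpha+1), eta rho^(beta+1) are Newtonianly dual. *)
Definition newton_dual (alpha beta : R) : Prop :=
  (alpha + 3) / 2 = 2 / (beta + 3).

(* Main.v *)
Require Import Defs.
From Stdlib Require Import Reals Lra.
From Coquelicot Require Import Coquelicot.
Open Scope R_scope.

Lemma exp_lin (x y l : R) : exp ((x + y) * l) = exp (x * l) * exp (y * l).
Proof. rewrite Rmult_plus_distr_r; apply exp_plus. Qed.

Theorem mainTheorem2 (a A xi eta mu calE L : R) :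
  0 < a + 3 ->
  (a + 3) / 2 = 2 / (A + 3) ->
  let U := fun r => xi * Rpower r (a + 1) + mu * Rpower r (2 * (sqrt ((a + 3) / 2) - 1)) in
  let V := fun rho => eta * Rpower rho (A + 1) + mu * Rpower rho (2 * (sqrt ((A + 3) / 2) - 1)) in
  (* (i) classical Newtonian duality of U and V *)
  (forall (theta : R -> R) (I : R -> Prop),
     is_open_interval I ->
     (forall r, I r -> 0 < r) ->
     xi = - calE ->
     orbit_eq U (- eta) L theta I ->
     orbit_eq V calE L
       (fun rho => 2 / (A + 3) * theta (Rpower rho ((A + 3) / 2)))
       (fun rho => 0 < rho /\ I (Rpower rho ((A + 3) / 2)))) /\
  (* (ii) termwise Newtonian duality of the power potentials *)
  (newton_dual a A /\
   newton_dual (2 * sqrt ((a + 3) / 2) - 3) (2 * sqrt ((A + 3) / 2) - 3)).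
Proof.
  intros Ha HaA U V.
  assert (HA : 0 < A + 3).
  { destruct (Rlt_or_le 0 (A + 3)) as [h|h]; auto.
    destruct h as [h|h].
    - exfalso. assert (0 < 2 / (A+3)) by (rewrite <- HaA; lra).
      assert (2 / (A + 3) < 0).
      { unfold Rdiv. apply Rmult_pos_neg; [lra| apply Rinv_lt_0_compat; lra]. }
      lra.
    - exfalso. rewrite h in HaA. unfold Rdiv in HaA. rewrite Rinv_0 in HaA. lra. }
  assert (Hs : exists s, 0 < s /\ A = 2 * s^2 - 3 /\ a = 2 / s^2 - 3).
  { exists (sqrt ((A+3)/2)). assert (0 < (A+3)/2) by lra.
    split; [apply sqrt_lt_R0; lra|].
    rewrite pow2_sqrt by lra. split; [field|].
    apply (Rmult_eq_reg_r (/2)); [|lra]. replace ((2 / ((A + 3) / 2) - 3) * / 2) with (2/(A+3) - 3/2) by (field; lra).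
    rewrite <- HaA. field. }
  destruct Hs as [s [hs [-> ->]]].
  assert (E1 : (2 * s ^ 2 - 3 + 3) / 2 = s^2) by field.
  assert (E2 : (2 / s ^ 2 - 3 + 3) / 2 = / s^2) by (field; lra).
  assert (S1 : sqrt (s^2) = s) by (apply sqrt_pow2; lra).
  assert (S2 : sqrt (/ s^2) = / s) by (rewrite sqrt_inv, S1; reflexivity).
  subst U V. rewrite !E1, !E2, S1, S2.
  split; [|split; unfold newton_dual; [field; lra| field; lra]].
  intros theta I _ _ hxi horb rho [hrho hI]. subst xi.
  destruct (horb _ hI) as [hpos hder].
  unfold Rpower in *. rewrite ln_exp in hpos, hder.
  set (l := ln rho) in *.
  assert (Hrho : rho = exp l) by (unfold l; rewrite exp_ln; auto).
  set (P := exp (s^2 * l)) in *.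
  set (q := exp l) in *.
  assert (hP : 0 < P) by apply exp_pos.
  assert (hq : 0 < q) by apply exp_pos.
  assert (h1 : exp ((2 / s ^ 2 - 3 + 1) * (s ^ 2 * l)) * P^2 = q^2).
  { unfold P, q. simpl. rewrite !Rmult_1_r, <- !exp_plus. f_equal. field. lra. }
  assert (h2 : exp (2 * (/ s - 1) * (s ^ 2 * l)) * P^2 = exp (2 * (s - 1) * l) * q^2).
  { unfold P, q. simpl. rewrite !Rmult_1_r, <- !exp_plus. f_equal. field. lra. }
  assert (h3 : exp ((2 * s ^ 2 - 3 + 1) * l) * q^2 = P^2).
  { unfold P, q. simpl. rewrite !Rmult_1_r, <- !exp_plus. f_equal. field. }
  set (X := - eta - L ^ 2 / (2 * P ^ 2) -
            (- calE * exp ((2 / s ^ 2 - 3 + 1) * (s ^ 2 * l)) +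
             mu * exp (2 * (/ s - 1) * (s ^ 2 * l)))) in *.
  assert (HY : calE - L ^ 2 / (2 * rho ^ 2) -
     (eta * exp ((2 * s ^ 2 - 3 + 1) * l) + mu * exp (2 * (s - 1) * l))
     = (P / q)^2 * X).
  { rewrite Hrho. unfold X.
    apply (Rmult_eq_reg_r (q^2)); [|apply pow_nonzero; lra].
    replace ((P / q) ^ 2 *
      (- eta - L ^ 2 / (2 * P ^ 2) -
       (- calE * exp ((2 / s ^ 2 - 3 + 1) * (s ^ 2 * l)) +
        mu * exp (2 * (/ s - 1) * (s ^ 2 * l)))) * q ^ 2)
      with (- eta * P^2 - L^2/2 + calE * (exp ((2 / s ^ 2 - 3 + 1) * (s ^ 2 * l)) * P^2)
            - mu * (exp (2 * (/ s - 1) * (s ^ 2 * l)) * P^2)) by (field; lra).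
    rewrite h1, h2, <- h3. field. lra. }
  rewrite HY. split.
  { apply Rmult_lt_0_compat; auto. apply pow_lt. apply Rdiv_lt_0_compat; lra. }
  assert (hX : 0 < sqrt (2 * X)) by (apply sqrt_lt_R0; lra).
  replace (sqrt (2 * ((P / q) ^ 2 * X))) with ((P/q) * sqrt (2 * X)).
  2:{ replace (2 * ((P / q) ^ 2 * X)) with ((P/q)^2 * (2 * X)) by ring.
      rewrite (sqrt_mult_alt ((P/q)^2)) by (apply pow2_ge_0). rewrite sqrt_pow2; auto.
      apply Rlt_le, Rdiv_lt_0_compat; lra. }
  assert (hg : is_derive (fun x => exp (s^2 * ln x)) rho (s^2 * / rho * P)).
  { unfold P, l. auto_derive; [lra| simpl; ring]. }
  pose proof (is_derive_comp theta (fun x => exp (s^2 * ln x)) rho _ _ hder hg) as hc.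
  replace (L / rho ^ 2 / (P / q * sqrt (2 * X))) with
    (2 / (2 * s ^ 2 - 3 + 3) * scal (s ^ 2 * / rho * P) (L / P ^ 2 / sqrt (2 * X))).
  { apply is_derive_scal. exact hc. }
  rewrite Hrho. fold q. unfold scal; simpl; unfold mult; simpl. field.
  repeat split; lra.
Qed.
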